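(* For every $\Delta\in\mathbb{N}$ there exists $k_0$ such that for all $k\ge k_0$ the following holds. Let $T$ be a tree with $k$ edges and $\Delta(T)\le\Delta$. Then there exist a matching $M$, a tree $S$ and a forest $F$, all subgraphs of $T$, whose edge sets form a partition of $E(T)$, such that: (a) $S$ and $F$ are vertex-disjoint; (b) every edge of $M$ has exactly one endpoint in $S$ and one endpoint in $F$; (c) $S$ and every component of $F$ each have at most $\lceil k/2\rceil$ vertices; (d) all vertices of $V(M)\cap V(S)$ belong to the same bipartition class of $T$; (e) the smallest subtree of $S$ containing $V(M)\cap V(S)$ has at most $\Delta^{4\Delta+1}$ vertices.
   Context: A matching is a set of pairwise vertex-disjoint edges, viewed as a subgraph. $\Delta(T)$ is the maximum degree of $T$. *)

(* Defs.v *)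
(* Graphs on a finite vertex type V; an edge is a 2-element
   vertex set; a (sub)graph is a pair (vertex set, edge set). *)
From mathcomp Require Import all_boot.
Set Implicit Arguments. Unset Strict Implicit. Unset Printing Implicit Defensive.

Section Graphs.
Variable V : finType.

Definition is_graph (E : {set {set V}}) : Prop := forall e, e \in E -> #|e| = 2.

(* (A, EA) is a subgraph of the graph with edge set E (vertex set all of V) *)
Definition subgraph (E : {set {set V}}) (A : {set V}) (EA : {set {set V}}) : Prop :=
  EA \subset E /\ forall e, e \in EA -> e \subset A.

Definition adj (A : {set V}) (EA : {set {set V}}) : rel V :=
  fun x y => [&& x \in A, y \in A & [set x; y] \in EA].

Definition connectedb (A : {set V}) (EA : {set {set V}}) : bool :=
  [forall x in A, forall y in A, connect (adj A EA) x y].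

Definition acyclic (A : {set V}) (EA : {set {set V}}) : Prop :=
  forall s : seq V, uniq s -> 3 <= size s -> ~~ cycle (adj A EA) s.

Definition is_tree (A : {set V}) (EA : {set {set V}}) : Prop :=
  A != set0 /\ connectedb A EA /\ acyclic A EA.

Definition is_forest (A : {set V}) (EA : {set {set V}}) : Prop := acyclic A EA.

Definition component (A : {set V}) (EA : {set {set V}}) (x : V) : {set V} :=
  [set y in A | connect (adj A EA) x y].

Definition degree (E : {set {set V}}) (v : V) : nat := #|[set e in E | v \in e]|.

Definition is_matching (EM : {set {set V}}) : Prop :=
  forall e f, e \in EM -> f \in EM -> e != f -> [disjoint e & f].

Definition edge_vertices (EM : {set {set V}}) : {set V} := \bigcup_(e in EM) e.

(* vertex set of the smallest subtree of the tree (A, EA) containing X: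
   intersection of the vertex sets of all subtrees of (A, EA) containing X
   (a subtree of a tree is determined by its vertex set, which must be
   nonempty and induce a connected subgraph). *)
Definition hull (A : {set V}) (EA : {set {set V}}) (X : {set V}) : {set V} :=
  [set v | [forall B : {set V},
     [&& B \subset A, X \subset B, B != set0 & connectedb B EA] ==> (v \in B)]].

Definition same_class (E : {set {set V}}) (B : {set V}) : Prop :=
  exists c : V -> bool, (forall x y, [set x; y] \in E -> c x != c y) /\
    (forall x y, x \in B -> y \in B -> c x = c y).

End Graphs.

(* Main.v *)
Require Import Defs.
From mathcomp Require Import all_boot.
From mathcomp Require Import zify.
Set Implicit Arguments. Unset Strict Implicit. Unset Printing Implicit Defensive.

Section Build.
Variables (V : finType) (E : {set {set V}}).
Hypothesis hconn : connectedb [set: V] E.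
Hypothesis hacyc : acyclic [set: V] E.

Lemma adjT x y : adj [set: V] E x y = ([set x; y] \in E).
Proof. by rewrite /adj !inE. Qed.

Lemma cut_edge x y : x != y -> [set x; y] \in E ->
  ~~ connect (adj [set: V] (E :\ [set x; y])) x y.
Proof.
move=> nxy hE; apply/negP => /connectP [s hs hl].
move: hl; case: (shortenP hs) => s' hs' hu _ hl'.
case: s' hs' hu hl' => [|z s']; first by move=> _ _ /= h; rewrite h eqxx in nxy.
case: s' => [|w s'].
  move=> /= /andP [h _] _ hz; move: h; rewrite /adj !inE hz eqxx; by case/andP.
move=> hp hu hl'.
have := hacyc hu => /(_ isT) /negP; apply.
rewrite /cycle rcons_path; apply/andP; split.
  apply: sub_path hp => a b; rewrite /adj => /and3P [-> ->].
  by rewrite inE => /andP [_ ->].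
rewrite /= in hl' *; rewrite -hl' adjT setUC //.
Qed.

Variable r : V.

Definition ball n := iter n (fun B : {set V} => B :|: [set y | [exists x in B, [set x; y] \in E]]) [set r].

Lemma ball_mono m n : m <= n -> ball m \subset ball n.
Proof.
move=> /subnK <-; elim: (n - m) => [|k IH] //=.
apply: subset_trans IH _; exact: subsetUl.
Qed.

Lemma in_ball x : exists n, x \in ball n.
Proof.
have : connect (adj [set: V] E) r x by move/forallP: hconn => /(_ r) /implyP /(_ (in_setT _))
    /forallP /(_ x) /implyP /(_ (in_setT _)).
move/connectP => [s hs ->].
have : r \in ball 0 by rewrite /= inE.
elim: s 0 r hs => [|z s IH] m y /=; first by move=> _ h; exists m.
move=> /andP [hyz hs] hy; apply: (IH m.+1) => //=.
apply/setUP; right; rewrite inE; apply/existsP; exists y; rewrite hy -adjT //.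
Qed.

Definition dep x := ex_minn (in_ball x).

Lemma dep_ball x : x \in ball (dep x).
Proof. by rewrite /dep; case: ex_minnP. Qed.

Lemma dep_min x n : x \in ball n -> dep x <= n.
Proof. by rewrite /dep; case: ex_minnP => m _ h /h. Qed.

Lemma dep_r : dep r = 0.
Proof. apply/eqP; rewrite -leqn0; apply: dep_min; by rewrite /= inE. Qed.

Lemma dep0 x : dep x = 0 -> x = r.
Proof. move=> h; have := dep_ball x; rewrite h /= inE; by move/eqP. Qed.

Lemma par_ex x : x != r -> exists w, [set w; x] \in E /\ (dep w).+1 = dep x.
Proof.
move=> hx; case hd: (dep x) => [|m]; first by rewrite (dep0 hd) eqxx in hx.
have := dep_ball x; rewrite hd /= => /setUP [h|].
  by have := dep_min h; rewrite hd ltnn.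
rewrite inE => /existsP [w /andP [hw hE]]; exists w; split => //.
apply/eqP; rewrite eqn_leq; apply/andP; split; first by rewrite ltnS dep_min.
have : x \in ball (dep w).+1.
  rewrite /= inE; apply/orP; right; rewrite inE; apply/existsP; exists w; by rewrite dep_ball.
by move/dep_min; rewrite hd.
Qed.

Definition par x := if [pick w | ([set w; x] \in E) && ((dep w).+1 == dep x)] is Some w then w else r.

Lemma par_spec x : x != r -> [set x; par x] \in E /\ (dep (par x)).+1 = dep x.
Proof.
move=> hx; rewrite /par; case: pickP => [w /andP [h1 /eqP h2]|h].
  by rewrite setUC.
case: (par_ex hx) => w [h1 h2]; move: (h w); by rewrite h1 h2 eqxx.
Qed.

Lemma par_r : par r = r.
Proof. rewrite /par; case: pickP => [w /andP [_ ]|//]; by rewrite dep_r. Qed.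

Lemma edge_par x y : [set x; y] \in E -> x != y ->
  (x != r /\ y = par x) \/ (y != r /\ x = par y).
Proof.
move=> hE nxy.
case: (boolP ((x != r) && (y == par x))) => [/andP [h1 /eqP h2]|h1]; first by left.
case: (boolP ((y != r) && (x == par y))) => [/andP [h3 /eqP h4]|h2]; first by right.
exfalso; move: (cut_edge nxy hE) => /negP; apply.
set a := adj [set: V] (E :\ [set x; y]).
have asym : connect_sym a.
  apply: sym_connect_sym => u v; by rewrite /a /adj setUC andbCA.
have up : forall z, connect a z r.
  move=> z; elim: {z} (dep z) {-2}z (erefl (dep z)) => [|n IH] z hz.
    by rewrite (dep0 hz) connect0.
  have hzr : z != r by apply/eqP => hh; rewrite hh dep_r in hz.
  case: (par_spec hzr) => hE' hd.
  have hpn : dep (par z) = n by move: hd; rewrite hz => -[].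
  apply: connect_trans (IH _ hpn).
  apply: connect1; rewrite /a /adj !inE hE' andbT.
  apply/eqP => heq.
  have : z \in [set x; y] by rewrite -heq !inE eqxx.
  case/set2P => hzxy; subst z.
  + have : par x \in [set x; y] by rewrite -heq !inE eqxx orbT.
    case/set2P => hp; first by move: hd; rewrite hp; lia.
    by move: h1; rewrite hzr hp eqxx.
  + have : par y \in [set x; y] by rewrite -heq !inE eqxx orbT.
    case/set2P => hp; last by move: hd; rewrite hp; lia.
    by move: h2; rewrite hzr hp eqxx.
apply: connect_trans (up x) _; by rewrite asym.
Qed.

End Build.


Lemma arith3 a b w w0 n : a * w <= b * w0 -> w0 <= n -> 3 * b <= a -> 0 < a -> 3 * w <= n.
Proof.
move=> h1 h2 h3 h4; case: (posnP b) => [b0|bp].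
  by move: h1; rewrite b0 mul0n leqn0 muln_eq0 (negbTE (lt0n_neq0 h4)) /= => /eqP ->.
rewrite -(leq_pmul2l bp); apply: leq_trans (_ : b * w0 <= _); last by rewrite leq_mul2l h2 orbT.
apply: leq_trans h1; by rewrite mulnA (mulnC b 3) leq_mul2r h3 orbT.
Qed.

Lemma bernoulli d m : d ^ m * (d + m) <= d * (d + 1) ^ m.
Proof.
elim: m => [|m IH]; first by rewrite !expn0 mul1n muln1 addn0.
rewrite !expnS; move: IH; set X := d ^ m; set Y := (d + 1) ^ m => IH.
have h1 : X * (d + m) * (d + 1) <= d * Y * (d + 1) by rewrite leq_mul2r IH orbT.
have h2 : d * X * (d + m.+1) <= X * (d + m) * (d + 1) by nia.
apply: leq_trans h2 _; apply: leq_trans h1 _; by rewrite mulnAC mulnA.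
Qed.

Lemma bern3 D : 2 <= D -> 3 * (D - 2) ^ (2 * D) <= (D - 1) ^ (2 * D).
Proof.
move=> hD; set d := D - 2.
have e : D - 1 = d + 1 by rewrite /d; lia.
rewrite e; case: (posnP d) => [->|dp].
  by rewrite exp0n ?muln0 //; lia.
have hb := bernoulli d (2 * D).
rewrite -(leq_pmul2l dp); apply: leq_trans hb.
rewrite mulnCA mulnC (mulnC d) -mulnA leq_mul2l; apply/orP; right.
rewrite /d; lia.
Qed.

Section Rooted.
Variables (V : finType) (E : {set {set V}}) (r : V) (p : V -> V) (d : V -> nat).
Hypothesis hpr : p r = r.
Hypothesis hd : forall x, x != r -> (d (p x)).+1 = d x.
Hypothesis hd0 : forall x, d x = 0 -> x = r.
Hypothesis hdr : d r = 0.

Lemma arith1 a b : a + true <= b -> a <= b - 1.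
Proof. move=> h; lia. Qed.

Lemma arith2 a b R : a + (2 * R).+1 < b -> a + 2 + 2 * R <= b.
Proof. lia. Qed.

Lemma no_loop2 n : n.+2 <= n -> False.
Proof. lia. Qed.

Definition isanc a x := (d a <= d x) && (iter (d x - d a) p x == a).
Definition sub a := [set x | isanc a x].
Definition child z a := (z != r) && (p z == a).
Definition anc l x := iter (d x - l) p x.

Lemma nr_d x : x != r -> 0 < d x.
Proof. move=> h; have := hd h; lia. Qed.

Lemma d_nr x : 0 < d x -> x != r.
Proof. by move=> h; apply/eqP => e; move: h; rewrite e hdr. Qed.

Lemma iter_dep n x : n <= d x -> d (iter n p x) = d x - n.
Proof.
elim: n => [|n IH] h /=; first by rewrite subn0.
have h1 := IH (ltnW h).
have : iter n p x != r by apply: d_nr; lia.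
move/hd; lia.
Qed.

Lemma isanc_refl x : isanc x x.
Proof. by rewrite /isanc leqnn subnn eqxx. Qed.

Lemma isanc_d a x : isanc a x -> d a <= d x.
Proof. by case/andP. Qed.

Lemma isanc_eq a x : isanc a x -> d a = d x -> a = x.
Proof. move=> /andP [_ /eqP h] e; by rewrite -h e subnn. Qed.

Lemma isanc_par a x : isanc a x -> x != a -> isanc a (p x).
Proof.
move=> h nxa; case/andP: (h) => h1 /eqP h2.
have hlt : d a < d x by rewrite ltn_neqAle h1 andbT; apply/eqP => e; rewrite (isanc_eq h e) eqxx in nxa.
have hxr : x != r by apply: d_nr; lia.
have := hd hxr => hpx.
rewrite /isanc; apply/andP; split; first lia.
have e : (d (p x) - d a).+1 = d x - d a by lia.
by rewrite -iterSr e h2.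
Qed.

Lemma isanc_child a x : isanc a (p x) -> x != r -> isanc a x.
Proof.
move=> /andP [h1 /eqP h2] hxr; have := hd hxr => hpx.
rewrite /isanc; apply/andP; split; first lia.
have -> : d x - d a = (d (p x) - d a).+1 by lia.
by rewrite iterSr h2.
Qed.

Lemma isanc_trans a b x : isanc a b -> isanc b x -> isanc a x.
Proof.
move=> /andP [h1 /eqP h2] /andP [h3 /eqP h4].
rewrite /isanc; apply/andP; split; first lia.
have -> : d x - d a = (d b - d a) + (d x - d b) by lia.
by rewrite iterD h4 h2.
Qed.

Lemma isanc_chain a b x : isanc a x -> isanc b x -> d a <= d b -> isanc a b.
Proof.
move=> /andP [h1 /eqP h2] /andP [h3 /eqP h4] hab.
rewrite /isanc hab /=.
have e : d x - d a = (d b - d a) + (d x - d b) by lia.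
have : iter (d b - d a) p (iter (d x - d b) p x) = a by rewrite -iterD -e.
by rewrite h4 => ->.
Qed.

Lemma isanc_r x : isanc r x.
Proof.
rewrite /isanc hdr subn0 leq0n /=; apply/eqP; apply: hd0.
by rewrite iter_dep // subnn.
Qed.

Lemma anc_spec l x : l <= d x -> isanc (anc l x) x /\ d (anc l x) = l.
Proof.
move=> hl; have hdl : d (anc l x) = l by rewrite /anc iter_dep; lia.
split => //; by rewrite /isanc hdl hl eqxx.
Qed.

Lemma anc_uniq a x : isanc a x -> a = anc (d a) x.
Proof. by case/andP => _ /eqP. Qed.

Lemma child_isanc z a : child z a -> isanc a z.
Proof. case/andP => hz /eqP <-; apply: isanc_child; [exact: isanc_refl|done]. Qed.

Lemma child_d z a : child z a -> d z = (d a).+1.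
Proof. by case/andP => hz /eqP <-; rewrite hd. Qed.

Lemma isanc_ne_child a x : isanc a x -> x != a -> child (anc (d a).+1 x) a /\ isanc (anc (d a).+1 x) x.
Proof.
move=> h nxa.
have hlt : d a < d x by rewrite ltn_neqAle isanc_d // andbT; apply/eqP => e; rewrite (isanc_eq h e) eqxx in nxa.
case: (anc_spec hlt) => h1 h2.
have hz : anc (d a).+1 x != r by apply: d_nr; lia.
split => //; rewrite /child hz /=.
have := hd hz; rewrite h2 => -[] hpd.
have hpa : isanc (p (anc (d a).+1 x)) x.
  apply: isanc_trans h1; apply: isanc_child hz; exact: isanc_refl.
by apply/eqP; rewrite (anc_uniq hpa) hpd -(anc_uniq h).
Qed.

Lemma card_fiber (A Y : {set V}) (f : V -> V) :
  (forall x, x \in A -> f x \in Y) ->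
  #|A| = \sum_(y in Y) #|[set x in A | f x == y]|.
Proof.
move=> hf; rewrite -sum1_card (partition_big f (mem Y)) //=.
apply: eq_bigr => y _; rewrite -sum1_card; apply: eq_bigl => x; by rewrite inE.
Qed.


Hypothesis hpE : forall x, x != r -> [set x; p x] \in E.
Hypothesis hEp : forall x y, [set x; y] \in E -> x != y ->
  (x != r /\ y = p x) \/ (y != r /\ x = p y).
Hypothesis hg : is_graph E.

Lemma p_neq x : x != r -> p x != x.
Proof. move=> h; apply/eqP => e; have := hd h; rewrite e; lia. Qed.

Lemma edge2 e : e \in E -> exists z, z != r /\ e = [set z; p z].
Proof.
move=> he; have := hg he => /eqP /cards2P [x [y [nxy exy]]].
rewrite exy in he *; case: (hEp he nxy) => [[h1 h2]|[h1 h2]].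
  by exists x; rewrite -h2.
by exists y; rewrite -h2 setUC.
Qed.

Lemma sub2 (a b : V) (A : {set V}) : ([set a; b] \subset A) = (a \in A) && (b \in A).
Proof. by rewrite subUset !sub1set. Qed.

Variable c : V.
Variable big : V -> V.
Variable R : nat.
Hypothesis hbig : forall a z, child z a -> child (big a) a /\ #|sub z| <= #|sub (big a)|.

Definition range a := [&& isanc c a, d c + 2 <= d a, d a <= d c + 2 * R & ~~ odd (d a - d c)].
Definition chosen a := range a && child (big a) a.
Definition S := [set x | isanc c x && ~~ [exists a, chosen a && isanc (big a) x]].

Lemma chosen_d a : chosen a -> d (big a) = (d a).+1 /\ d c + 2 <= d a.
Proof. case/andP => /and4P [_ h _ _] hc; by rewrite (child_d hc). Qed.

Lemma S_c : c \in S.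
Proof.
rewrite inE isanc_refl /=; apply/existsP => -[a /andP [ha hb]].
have := isanc_d hb; have := chosen_d ha; lia.
Qed.

Lemma S_T x : x \in S -> isanc c x.
Proof. by rewrite inE => /andP []. Qed.

Lemma S_anc x a : x \in S -> isanc a x -> isanc c a -> a \in S.
Proof.
rewrite !inE => /andP [_ hx] hax ->; apply: contra hx => /existsP [b /andP [hb hba]].
apply/existsP; exists b; rewrite hb; exact: isanc_trans hba hax.
Qed.

Lemma S_up x : x \in S -> x != c -> p x \in S.
Proof.
move=> hx nxc; have hc := S_T hx.
have hne : d c != d x by apply: contra nxc => /eqP e; rewrite (isanc_eq hc e).
have hxr : x != r by apply: d_nr; have := isanc_d hc; move: hne => /eqP; lia.
apply: (S_anc hx); first by apply: isanc_child; [exact: isanc_refl|].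
exact: isanc_par.
Qed.

Lemma big_nS a : chosen a -> big a \notin S.
Proof.
move=> ha; rewrite inE negb_and; apply/orP; right; rewrite negbK.
apply/existsP; exists a; by rewrite ha isanc_refl.
Qed.

Lemma S_drop x : x \notin S -> p x \in S -> x != r -> chosen (p x) /\ x = big (p x).
Proof.
move=> hx hp hxr.
have hcx : isanc c x by apply: isanc_child => //; exact: S_T.
move: hx; rewrite inE hcx /= negbK => /existsP [a /andP [ha hax]].
have e : x = big a.
  apply/eqP; apply: contraT => nx.
  have := isanc_par hax nx => h.
  by move: hp; rewrite inE => /andP [_ /existsP []]; exists a; rewrite ha.
have : p x = a by rewrite e; case/andP: ha => _ /andP [_ /eqP].
by move=> hpa; rewrite hpa.
Qed.

Lemma crossing e : e \in E -> ~~ (e \subset S) -> ~~ (e \subset ~: S) ->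
  exists z, [/\ z != r, e = [set z; p z] &
    ((z = c /\ z \in S /\ p z \notin S) \/ (z \notin S /\ p z \in S /\ chosen (p z) /\ z = big (p z)))].
Proof.
move=> he; case: (edge2 he) => z [hz ->]; rewrite !sub2 !in_setC negb_and => h1 h2.
exists z; split => //.
case: (boolP (z \in S)) => hzS.
  have hpS : p z \notin S by move: h1; rewrite hzS.
  left; split => //; apply/eqP; apply: contraT => nzc.
  by rewrite (S_up hzS nzc) in hpS.
have hpS : p z \in S by move: h2; rewrite hzS /= negbK.
right; have [h3 h4] := S_drop hzS hpS hz; done.
Qed.

Hypothesis hacyc : acyclic [set: V] E.

Definition ES := [set e in E | e \subset S].
Definition EF := [set e in E | e \subset ~: S].
Definition EM := E :\: (ES :|: EF).

Lemma inEM e : (e \in EM) = [&& e \in E, ~~ (e \subset S) & ~~ (e \subset ~: S)].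
Proof.
rewrite /EM /ES /EF !inE; case: (e \in E); case: (e \subset S); by case: (e \subset ~: S).
Qed.

Lemma EM_spec e : e \in EM -> exists s t, [/\ e = [set s; t], s \in S, t \notin S &
  ((s = c /\ c != r /\ t = p c) \/ (chosen s /\ t = big s))].
Proof.
rewrite inEM => /and3P [he h1 h2].
case: (crossing he h1 h2) => z [hz -> [[ezc [hs ht]]|[hs [ht [hch hb]]]]].
  subst z; exists c, (p c); split => //; left; split => //.
exists (p z), z; split => //; first by rewrite setUC.
by right; split.
Qed.

Lemma chosen_nc a : chosen a -> a != c.
Proof. move=> h; apply/eqP => e; have := chosen_d h; rewrite e; lia. Qed.

Lemma EM_match : is_matching EM.
Proof.
move=> e f he hf nef; rewrite -setI_eq0; apply/eqP/setP => v; rewrite !inE.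
apply/negP => /andP [hve hvf].
case: (EM_spec he) => s1 [t1 [ee hs1 ht1 c1]].
case: (EM_spec hf) => s2 [t2 [ef hs2 ht2 c2]].
move: hve hvf; rewrite ee ef !inE => hv1 hv2.
have key : s1 = s2 \/ t1 = t2.
  case: (boolP (v \in S)) => hv.
    left; move: hv1 hv2 => /orP [/eqP e1|/eqP e1]; last by rewrite -e1 hv in ht1.
    move=> /orP [/eqP e2|/eqP e2]; last by rewrite -e2 hv in ht2.
    by rewrite -e1 -e2.
  right; move: hv1 hv2 => /orP [/eqP e1|/eqP e1]; first by rewrite e1 hs1 in hv.
  move=> /orP [/eqP e2|/eqP e2]; first by rewrite e2 hs2 in hv.
  by rewrite -e1 -e2.
move/eqP: nef; apply; rewrite ee ef.
case: key => [es|et].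
  subst s2; case: c1 c2 => [[h1 [h2 h3]]|[h1 h3]] [[h4 [h5 h6]]|[h4 h6]]; try by rewrite h3 h6.
  - by move: (chosen_nc h4); rewrite h1 eqxx.
  - by move: (chosen_nc h1); rewrite h4 eqxx.
subst t2.
have pbig : forall s, chosen s -> p (big s) = s.
  by move=> s /andP [_ /andP [_ /eqP]].
have bad : forall s, chosen s -> p c = big s -> c != r -> False.
  move=> s hs eb hcr.
  have : p (p c) = s by rewrite eb pbig.
  move=> hpp; case/andP: (hs) => /and4P [hcs _ _ _] _.
  have := isanc_d hcs; rewrite -hpp.
  have hpc : p c != r by rewrite eb; case/andP: (hs) => _ /andP [].
  have := hd hcr; have := hd hpc; move=> h1 h2 h3; apply: (@no_loop2 (d (p (p c)))).
  by rewrite h1 h2.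
case: c1 c2 => [[h1 [h2 h3]]|[h1 h3]] [[h4 [h5 h6]]|[h4 h6]].
- by rewrite h1 h4.
- by exfalso; apply: (bad s2 h4) => //; rewrite -h3 h6.
- by exfalso; apply: (bad s1 h1) => //; rewrite -h6 h3.
- have : s1 = s2 by rewrite -(pbig _ h1) -(pbig _ h4) -h3 -h6.
  by move=> ->.
Qed.

Lemma acyc_sub (A : {set V}) (EA : {set {set V}}) : EA \subset E -> acyclic A EA.
Proof.
move=> hs s hu hsz; apply/negP => hc; apply: (negP (hacyc hu hsz)).
move: hc; apply: sub_cycle => x y; rewrite /adj !inE => /and3P [_ _ h].
exact: (subsetP hs).
Qed.

Lemma closure (e : rel V) (X : {set V}) x y :
  (forall u w, u \in X -> e u w -> w \in X) -> x \in X -> connect e x y -> y \in X.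
Proof.
move=> hcl hx /connectP [s hs ->]; elim: s x hx hs => [|z s IH] x hx //= /andP [h1 h2].
apply: IH h2; exact: hcl h1.
Qed.

Lemma edge_neq x y : [set x; y] \in E -> x != y.
Proof. move=> h; apply/eqP => e; have := hg h; rewrite e setUid cards1. by []. Qed.

Lemma S_conn_c x : x \in S -> connect (adj S ES) x c.
Proof.
move=> hx; have hc := S_T hx.
elim: {x} (d x - d c) {-2}x (erefl (d x - d c)) hx hc => [|n IH] x hn hx hc.
  by rewrite (isanc_eq hc _) ?connect0 //; have := isanc_d hc; lia.
have nxc : x != c by apply/eqP => e; rewrite e subnn in hn.
have hxr : x != r by apply: d_nr; have := isanc_d hc; lia.
apply: connect_trans (IH (p x) _ (S_up hx nxc) (isanc_par hc nxc)).
  apply: connect1; rewrite /adj hx S_up //= inE hpE //= sub2 hx S_up //.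
have := hd hxr; lia.
Qed.

Lemma adj_sym (A : {set V}) (EA : {set {set V}}) : connect_sym (adj A EA).
Proof. apply: sym_connect_sym => u v; by rewrite /adj setUC andbCA. Qed.

Lemma S_tree : is_tree S ES.
Proof.
split; first by apply/set0Pn; exists c; exact: S_c.
split; last by apply: acyc_sub; apply/subsetP => e; rewrite inE => /andP [].
apply/forallP => x; apply/implyP => hx; apply/forallP => y; apply/implyP => hy.
apply: connect_trans (S_conn_c hx) _; rewrite adj_sym; exact: S_conn_c.
Qed.

Lemma F_forest : is_forest (~: S) EF.
Proof. by apply: acyc_sub; apply/subsetP => e; rewrite inE => /andP []. Qed.

Lemma partE : [/\ [disjoint ES & EF], [disjoint ES & EM], [disjoint EF & EM]
        & ES :|: EF :|: EM = E].
Proof.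
split.
- rewrite -setI_eq0; apply/eqP/setP => e; rewrite !inE.
  apply/negP => /andP [/andP [he h1] /andP [_ h2]].
  have := hg he => h; have : e != set0 by apply/eqP => e0; rewrite e0 cards0 in h.
  case/set0Pn => x hx; have h3 := subsetP h1 x hx; have h4 := subsetP h2 x hx; by rewrite inE h3 in h4.
- rewrite -setI_eq0 /EM; apply/eqP/setP => e; rewrite !inE.
  by case: (e \in E); case: (e \subset S); case: (e \subset ~: S).
- rewrite -setI_eq0 /EM; apply/eqP/setP => e; rewrite !inE.
  by case: (e \in E); case: (e \subset S); case: (e \subset ~: S).
- rewrite /EM; apply/setP => e; rewrite !inE; case: (e \in E); case: (e \subset S); by case: (e \subset ~: S).
Qed.

Lemma EM_b e : e \in EM -> #|e :&: S| = 1 /\ #|e :&: ~: S| = 1.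
Proof.
case/EM_spec => s [t [-> hs ht _]].
have nst : s != t by apply/eqP => est; move: ht; rewrite -est hs.
split.
  have -> : [set s; t] :&: S = [set s].
    apply/setP => x; rewrite in_setI in_set2 in_set1; case: (eqVneq x s) => [->|nxs] /=; first by rewrite hs.
    case: (eqVneq x t) => [->|] //=; by rewrite (negbTE ht).
  exact: cards1.
have -> : [set s; t] :&: ~: S = [set t].
  apply/setP => x; rewrite in_setI in_setC in_set2 in_set1; case: (eqVneq x t) => [->|nxt] /=; first by rewrite ht orbT.
  case: (eqVneq x s) => [->|] //=; by rewrite hs.
exact: cards1.
Qed.

Lemma X_spec v : v \in edge_vertices EM :&: S -> v = c \/ chosen v.
Proof.
rewrite inE => /andP [/bigcupP [e he hve] hv].
case: (EM_spec he) => s [t [ee hs ht hc]].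
move: hve; rewrite ee !inE => /orP [/eqP ->|/eqP e2]; last by move: ht; rewrite -e2 hv.
by case: hc => [[-> _]|[h _]]; [left|right].
Qed.

Lemma same_cl : same_class E (edge_vertices EM :&: S).
Proof.
exists (fun x => odd (d x)); split.
  move=> x y he; case: (hEp he (edge_neq he)) => [[hx ->]|[hy ->]].
    by rewrite -(hd hx) oddS; case: (odd _).
  by rewrite -(hd hy) oddS; case: (odd _).
have key : forall v, v \in edge_vertices EM :&: S -> odd (d v) = odd (d c).
  move=> v /X_spec [->|] //; case/andP => /and4P [hcv h1 h2 h3] _.
  move: h3; rewrite oddB ?(isanc_d hcv) //; by case: (odd (d v)); case: (odd (d c)).
by move=> x y hx hy; rewrite !key.
Qed.

Definition Bm m := [set x in S | d x <= d c + m].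

Lemma Bm_conn_c m x : x \in Bm m -> connect (adj (Bm m) ES) x c.
Proof.
rewrite inE => /andP [hx hm]; have hc := S_T hx.
elim: {x} (d x - d c) {-2}x (erefl (d x - d c)) hx hc hm => [|n IH] x hn hx hc hm.
  by rewrite (isanc_eq hc _) ?connect0 //; have := isanc_d hc; lia.
have nxc : x != c by apply/eqP => e; rewrite e subnn in hn.
have hxr : x != r by apply: d_nr; have := isanc_d hc; lia.
have hdx := hd hxr.
have hpm : d (p x) <= d c + m by lia.
apply: connect_trans (IH (p x) _ (S_up hx nxc) (isanc_par hc nxc) hpm); last by lia.
have hxB : x \in Bm m by rewrite inE hx hm.
have hpB : p x \in Bm m by rewrite inE S_up // hpm.
have hES : [set x; p x] \in ES by rewrite inE hpE // sub2 hx S_up.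
by apply: connect1; rewrite /adj hxB hpB hES.
Qed.

Lemma hull_le : #|hull S ES (edge_vertices EM :&: S)| <= #|Bm (2 * R)|.
Proof.
apply: subset_leq_card; apply/subsetP => v; rewrite inE => /forallP /(_ (Bm (2 * R))) /implyP; apply.
apply/and4P; split.
- by apply/subsetP => x; rewrite inE => /andP [].
- apply/subsetP => x hx; have hxS : x \in S by move: hx; rewrite in_setI => /andP [].
  rewrite inE hxS /=.
  case: (X_spec hx) => [->|/andP [/and4P [_ _ h _] _]] //; lia.
- by apply/set0Pn; exists c; rewrite inE S_c; lia.
- apply/forallP => x; apply/implyP => hx; apply/forallP => y; apply/implyP => hy.
  apply: connect_trans (Bm_conn_c hx) _; rewrite adj_sym; exact: Bm_conn_c.
Qed.

Variable h : nat.
Hypothesis hcz : forall z, child z c -> #|sub z| <= h.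
Hypothesis hcU : #|~: sub c| <= h.

Lemma comp_le x : x \in ~: S -> #|component (~: S) EF x| <= h.
Proof.
move=> hx.
have cl : forall X : {set V}, x \in X ->
    (forall u w, u \in X -> u \notin S -> w \notin S -> [set u; w] \in E -> w \in X) ->
    #|X| <= h -> #|component (~: S) EF x| <= h.
  move=> X hxX hX hXh; apply: leq_trans hXh; apply: subset_leq_card; apply/subsetP => y.
  rewrite inE => /andP [_]; apply: closure hxX => u w hu; rewrite /adj => /and3P [h1 h2 h3].
  move: h3; rewrite /EF inE => /andP [h3 _].
  by apply: (hX u) => //; [move: h1|move: h2]; rewrite in_setC.
case: (boolP (isanc c x)) => hcx.
  have nxc : x != c by apply/eqP => e; move: hx; rewrite e in_setC S_c.
  case: (isanc_ne_child hcx nxc) => hz hzx.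
  apply: (cl (sub (anc (d c).+1 x))); [by rewrite inE| |exact: hcz].
  move=> u w hu hun hwn he; move: hu; rewrite inE => hu; rewrite inE.
  case: (hEp he (edge_neq he)) => [[hur hwp]|[hwr hup]].
    rewrite hwp; apply: isanc_par => //; apply/eqP => e; move: hwn; rewrite hwp e.
    by case/andP: hz => _ /eqP ->; rewrite S_c.
  by apply: isanc_child => //; rewrite -hup.
apply: (cl (~: sub c)); [by rewrite !inE| |exact: hcU].
move=> u w hu hun hwn he; move: hu; rewrite in_setC inE => hu; rewrite in_setC inE.
case: (hEp he (edge_neq he)) => [[hur hwp]|[hwr hup]].
  by rewrite hwp; apply: contra hu => h1; apply: isanc_child.
apply: contra hu => h1; rewrite hup; apply: isanc_par => //.
by apply/eqP => e; move: hwn; rewrite e S_c.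
Qed.

Variable D : nat.
Hypothesis hdeg : forall v, degree E v <= D.

Definition chil x := [set z | child z x].

Lemma chil_card x : #|chil x| + (x != r) <= D.
Proof.
apply: leq_trans (hdeg x); rewrite /degree.
set I := [set e in E | x \in e].
have hinj : {in chil x &, injective (fun z => [set z; x])}.
  move=> z z' hz hz' e.
  have : z \in [set z'; x] by rewrite -e !inE eqxx.
  rewrite !inE => /orP [/eqP //|/eqP ezx].
  by move: hz; rewrite inE ezx => /andP [hxr /eqP hpx]; move: (p_neq hxr); rewrite hpx eqxx.
have hsub : [set [set z; x] | z in chil x] \subset I.
  apply/subsetP => e /imsetP [z hz ->]; rewrite inE !inE eqxx orbT andbT.
  move: hz; rewrite inE => /andP [hzr /eqP <-]; by rewrite hpE.
case: (boolP (x != r)) => hxr /=.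
  rewrite addn1 -(card_in_imset hinj); apply: proper_card; rewrite properEneq hsub andbT.
  apply/eqP => e.
  have : [set x; p x] \in I by rewrite inE hpE // !inE eqxx.
  rewrite -e => /imsetP [z hz ez].
  have : p x \in [set z; x] by rewrite -ez !inE eqxx orbT.
  rewrite !inE => /orP [/eqP hpz|/eqP hpx]; last by move: (p_neq hxr); rewrite hpx eqxx.
  move: hz; rewrite inE => /andP [hzr /eqP hpz']; have := hd hxr; have := hd hzr; rewrite hpz' -hpz; lia.
by rewrite addn0 -(card_in_imset hinj); apply: subset_leq_card.
Qed.

Definition Lev l := [set y | isanc c y && (d y == d c + l)].
Definition Ball m := [set y | isanc c y && (d y <= d c + m)].

Lemma Lev_card l : #|Lev l| <= D ^ l.
Proof.
elim: l => [|l IH].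
  rewrite expn0; have -> : Lev 0 = [set c].
    apply/setP => y; rewrite !inE addn0; apply/idP/idP => [/andP [h1 /eqP h2]|/eqP ->].
      by rewrite (isanc_eq h1 (esym h2)).
    by rewrite isanc_refl eqxx.
  by rewrite cards1.
rewrite (@card_fiber (Lev l.+1) (Lev l) p).
  apply: leq_trans (_ : \sum_(x in Lev l) D <= _); last by rewrite sum_nat_const expnS mulnC leq_mul2l IH orbT.
  apply: leq_sum => x hx; apply: leq_trans (_ : #|chil x| <= D); last by have := chil_card x; lia.
  apply: subset_leq_card; apply/subsetP => y; rewrite !inE => /andP [/andP [h1 /eqP h2] /eqP h3].
  rewrite /child -h3 eqxx andbT; apply: d_nr; lia.
move=> y; rewrite !inE => /andP [h1 /eqP h2].
have hyr : y != r by apply: d_nr; lia.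
have nyc : y != c by apply/eqP => e; move: h2; rewrite e; lia.
rewrite isanc_par //=; have := hd hyr; lia.
Qed.

Lemma Ball_card m : 2 <= D -> #|Ball m| < D ^ m.+1.
Proof.
move=> hD; elim: m => [|m IH].
  have -> : Ball 0 = [set c].
    apply/setP => y; rewrite !inE addn0; apply/idP/idP => [/andP [h1 h2]|/eqP ->].
      by rewrite (isanc_eq h1) //; have := isanc_d h1; lia.
    by rewrite isanc_refl leqnn.
  by rewrite cards1 expn1.
have : Ball m.+1 \subset Ball m :|: Lev m.+1.
  apply/subsetP => y; rewrite !inE => /andP [-> hh]; rewrite /=; lia.
move/subset_leq_card => hh; apply: leq_ltn_trans hh _.
apply: leq_ltn_trans (leq_card_setU _ _) _.
have := Lev_card m.+1; rewrite (expnS D m.+1) => h2.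
have : 2 * D ^ m.+1 <= D * D ^ m.+1 by rewrite leq_mul2r hD orbT.
lia.
Qed.

Lemma inS x : (x \in S) = isanc c x && ~~ [exists a, chosen a && isanc (big a) x].
Proof. by rewrite inE. Qed.
Opaque S.

Definition W L := [set y | [&& isanc c y, L <= d y & anc L y \in S]].

Lemma W_fiber L x : x \in S -> d x = L -> [set y in W L | anc L y == x] = sub x.
Proof.
move=> hx hdx; apply/setP => y; rewrite in_set [y \in W L]in_set [y \in sub x]in_set. apply/idP/idP.
  move=> /andP [/and3P [h1 h2 h3] /eqP <-]; by case: (anc_spec h2).
move=> hxy; have hL : L <= d y by rewrite -hdx; exact: isanc_d.
have ea : anc L y = x by rewrite -hdx -(anc_uniq hxy).
by rewrite ea hx eqxx hL (isanc_trans (S_T hx) hxy).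
Qed.

Lemma W_rec j : 1 <= j <= R ->
  (D - 1) * #|W (d c + 2 * j + 2)| <= (D - 2) * #|W (d c + 2 * j)|.
Proof.
move=> /andP [hj1 hj2]; set L := d c + 2 * j.
set Y := [set x in S | d x == L].
have mapA : forall y, y \in W (L + 2) -> anc L y \in Y.
  move=> y; rewrite inE => /and3P [h1 h2 h3].
  have hLy : L <= d y by apply: leq_trans h2; apply: leq_addr.
  case: (anc_spec hLy) => a1 a2; case: (anc_spec h2) => a3 a4.
  rewrite inE a2 eqxx andbT; apply: (S_anc h3).
    by apply: (isanc_chain a1 a3); rewrite a2 a4 leq_addr.
  by apply: (isanc_chain h1 a1); rewrite a2 /L leq_addr.
have mapB : forall y, y \in W L -> anc L y \in Y.
  move=> y; rewrite inE => /and3P [h1 h2 h3]; case: (anc_spec h2) => a1 a2.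
  by rewrite inE h3 a2 eqxx.
rewrite (card_fiber mapA) (card_fiber mapB) !big_distrr; apply: leq_sum => x.
rewrite inE => /andP [hxS /eqP hdx]; rewrite W_fiber //.
set G := [set y in W (L + 2) | anc L y == x].
change ((D - 1) * #|G| <= (D - 2) * #|sub x|).
case: (set_0Vmem G) => [->|[y hy]]; first by rewrite cards0 muln0.
have hdx2 : d c + 2 <= d x by rewrite hdx /L leq_add2l (leq_mul2l 2 1 j) hj1.
have hxr : x != r by apply: d_nr; apply: leq_trans hdx2; rewrite addn2.
have hcx := S_T hxS.
move: (hy); rewrite !inE => /andP [/and3P [hy1 hy2 hy3] /eqP hyx].
have hLy : L <= d y by apply: leq_trans hy2; apply: leq_addr.
have hxy : isanc x y by case: (anc_spec hLy) => a1 _; rewrite hyx in a1.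
have nyx : y != x by apply/eqP => e; move: hy2; rewrite e hdx -{2}(addn0 L) leq_add2l.
case: (isanc_ne_child hxy nyx) => hz _.
case: (hbig hz) => hb hzb.
set b := big x in hb hzb.
have hch : chosen x.
  rewrite /chosen hb andbT /range hcx hdx /L /=; apply/and3P; split.
  - rewrite leq_add2l; by rewrite (leq_mul2l 2 1 j) hj1.
  - by rewrite leq_add2l leq_mul2l hj2 orbT.
  - by rewrite addnC addnK oddM andFb.
have hdb := child_d hb.
set A := sub x :\ x.
have hGsub : G \subset A :\: sub b.
  apply/subsetP => y'; rewrite !inE => /andP [/and3P [h1 h2 h3] /eqP h4].
  have hLy' : L <= d y' by apply: leq_trans h2; apply: leq_addr.
  have hxy' : isanc x y' by case: (anc_spec hLy') => a1 _; rewrite h4 in a1.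
  rewrite hxy' andbT; apply/andP; split; last by apply/eqP => e; move: h2; rewrite e hdx -{2}(addn0 L) leq_add2l.
  apply/negP => hby'.
  case: (anc_spec h2) => a3 a4.
  have hbw : isanc b (anc (L + 2) y') by apply: (isanc_chain hby' a3); rewrite hdb a4 hdx addn2 leqnSn.
  move: h3 => /andP [_] /negP; apply.
  by apply/existsP; exists x; rewrite hch.
have hbA : sub b \subset A.
  apply/subsetP => y'; rewrite !inE => hby'.
  rewrite (isanc_trans (child_isanc hb) hby') andbT.
  by apply/eqP => e; have := isanc_d hby'; rewrite e hdb ltnn.
have cA : #|sub x| = #|A|.+1 by rewrite (cardsD1 x (sub x)) inE isanc_refl.
have cG : #|G| <= #|A| - #|sub b|.
  apply: leq_trans (subset_leq_card hGsub) _; by rewrite cardsD (setIidPr hbA).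
have cAb : #|A| <= #|chil x| * #|sub b|.
  have mapC : forall y', y' \in A -> anc (d x).+1 y' \in chil x.
    move=> y'; rewrite !inE => /andP [h1 h2]; by case: (isanc_ne_child h2 h1).
  rewrite (card_fiber mapC) -sum_nat_const; apply: leq_sum => z' hz'.
  apply: leq_trans (_ : #|sub z'| <= _); last by move: hz'; rewrite inE => /hbig [].
  apply: subset_leq_card; apply/subsetP => y'; rewrite !inE => /andP [/andP [h1 h2] /eqP <-].
  by case: (isanc_ne_child h2 h1).
have cC : #|chil x| <= D - 1 by have := chil_card x; rewrite hxr; apply: arith1.
have cbA : #|sub b| <= #|A| by apply: subset_leq_card.
rewrite cA.
have : #|A| <= (D - 1) * #|sub b| by apply: leq_trans cAb _; rewrite leq_mul2r cC orbT.
move: cG cbA; set a := #|A|; set t := #|sub b|; set g := #|G|; move=> cG cbA cAt.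
apply: leq_trans (_ : (D - 1) * (a - t) <= _); first by rewrite leq_mul2l cG orbT.
rewrite mulnBr; apply: leq_trans (_ : (D - 1) * a - a <= _); first exact: leq_sub2l.
have -> : (D - 1) * a - a = (D - 2) * a by rewrite -{2}(mul1n a) -mulnBl; congr (_ * _); rewrite -subnDA.
by rewrite leq_mul2l leqnSn orbT.
Qed.

Lemma W_iter i : i <= R -> (D - 1) ^ i * #|W (d c + 2 + 2 * i)| <= (D - 2) ^ i * #|W (d c + 2)|.
Proof.
elim: i => [|i IH] hi; first by rewrite !expn0 !mul1n muln0 addn0.
have hi' : i <= R by apply: ltnW.
have e1 : d c + 2 + 2 * i.+1 = d c + 2 * i.+1 + 2 by rewrite addnAC.
have e2 : d c + 2 * i.+1 = d c + 2 + 2 * i by rewrite mulnS addnA.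
have hr := @W_rec i.+1 hi; rewrite -e1 e2 in hr.
apply: leq_trans (_ : (D - 1) ^ i * ((D - 2) * #|W (d c + 2 + 2 * i)|) <= _).
  by rewrite expnS (mulnC (D - 1)) -mulnA leq_mul2l hr ?orbT.
by rewrite mulnCA expnS -mulnA leq_mul2l IH ?orbT.
Qed.

Lemma S_sub_BW : S \subset Ball (2 * R).+1 :|: W (d c + 2 + 2 * R).
Proof.
apply/subsetP => y hy; have hcy := S_T hy; rewrite !in_setU [y \in Ball _]inE [y \in W _]inE hcy /=.
case: (leqP (d y) (d c + (2 * R).+1)) => [//|hlt]; rewrite /=.
have hL : d c + 2 + 2 * R <= d y by apply: arith2.
rewrite hL /=; case: (anc_spec hL) => a1 a2; apply: (S_anc hy a1).
by apply: (isanc_chain hcy a1); rewrite a2 -addnA leq_addr.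
Qed.

Lemma card_E : #|E| + 1 = #|V|.
Proof.
have hinj : {in [set~ r] &, injective (fun z => [set z; p z])}.
  move=> z z' hz hz' e.
  have : z \in [set z'; p z'] by rewrite -e !inE eqxx.
  rewrite !inE => /orP [/eqP //|/eqP ez].
  have : z' \in [set z; p z] by rewrite e !inE eqxx.
  rewrite !inE => /orP [/eqP -> //|/eqP ez'].
  move: hz hz'; rewrite !inE => hz hz'.
  exfalso; have a1 := hd hz; have b1 := hd hz'; rewrite -ez' in a1; rewrite -ez in b1.
  clear -a1 b1; lia.
have -> : E = [set [set z; p z] | z in [set~ r]].
  apply/setP => e; apply/idP/idP.
    by move/edge2 => [z [hz ->]]; apply/imsetP; exists z; rewrite // !inE.
  by case/imsetP => z; rewrite !inE => hz ->; apply: hpE.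
rewrite (card_in_imset hinj) cardsC1 addn1 prednK //; apply/card_gt0P; by exists r.
Qed.

Lemma main_sec k (hD : 2 <= D) (hR : R = 2 * D) (hkE : #|E| = k)
  (hk : 6 * D ^ (4 * D + 2) + 6 <= k) (hh : h = uphalf k) :
  exists (VS : {set V}) (ES : {set {set V}}) (VF : {set V}) (EF : {set {set V}})
           (EM : {set {set V}}),
      [/\ subgraph E VS ES, subgraph E VF EF, EM \subset E & is_matching EM] /\
      is_tree VS ES /\ is_forest VF EF /\
      [/\ [disjoint ES & EF], [disjoint ES & EM], [disjoint EF & EM]
        & ES :|: EF :|: EM = E] /\
      [disjoint VS & VF] /\
      (forall e, e \in EM -> #|e :&: VS| = 1 /\ #|e :&: VF| = 1) /\
      (#|VS| <= uphalf k /\ forall x, x \in VF -> #|component VF EF x| <= uphalf k) /\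
      same_class E (edge_vertices EM :&: VS) /\
      #|hull VS ES (edge_vertices EM :&: VS)| <= D ^ (4 * D + 1).
Proof.
exists S, ES, (~: S), EF, EM.
split.
  split.
  - by split; [apply/subsetP => e; rewrite inE => /andP []|move=> e; rewrite inE => /andP []].
  - by split; [apply/subsetP => e; rewrite inE => /andP []|move=> e; rewrite inE => /andP []].
  - exact: subsetDl.
  - exact: EM_match.
split; first exact: S_tree.
split; first exact: F_forest.
split; first exact: partE.
split; first by rewrite disjoints_subset setCK.
split; first exact: EM_b.
split.
  split; last by move=> x hx; rewrite -hh; exact: comp_le.
  have hV : #|V| = k.+1 by rewrite -card_E hkE addn1.
  have h1 := subset_leq_card S_sub_BW.
  have h2 := (leq_card_setU (Ball (2 * R).+1) (W (d c + 2 + 2 * R))).1.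
  have h3 := Ball_card (2 * R).+1 hD.
  have h4 := W_iter (leqnn R).
  have h5 : #|W (d c + 2)| <= #|V| by apply: max_card.
  have h6 := bern3 hD.
  have h7 : 0 < (D - 1) ^ R by rewrite expn_gt0; apply/orP; left; lia.
  rewrite -hR in h6.
  have h8 := arith3 h4 h5 h6 h7.
  have e1 : (2 * R).+2 = 4 * D + 2 by rewrite hR; lia.
  rewrite e1 in h3.
  move: h1 h2 h3 h8 hk; rewrite hV.
  set B := D ^ (4 * D + 2); set w := #|W _|; set bb := #|Ball _|; set s := #|S|.
  move=> h1 h2 h3 h8 hk'; clear -h1 h2 h3 h8 hk'; lia.
split; first exact: same_cl.
apply: leq_trans hull_le _.
have : Bm (2 * R) \subset Ball (2 * R).
  apply/subsetP => x; rewrite !inE => /andP [/andP [hx _] ->]; by rewrite hx.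
move/subset_leq_card => hb; apply: leq_trans hb _.
have := Ball_card (2 * R) hD; rewrite hR => hb; apply: ltnW; apply: leq_trans hb _.
by rewrite mulnA -addn1.
Qed.

End Rooted.


Theorem lemma8p1 : forall Delta : nat, exists k0 : nat, forall k : nat, k0 <= k ->
  forall (V : finType) (E : {set {set V}}),
    is_graph E -> is_tree [set: V] E -> #|E| = k ->
    (forall v : V, degree E v <= Delta) ->
    exists (VS : {set V}) (ES : {set {set V}}) (VF : {set V}) (EF : {set {set V}})
           (EM : {set {set V}}),
      [/\ subgraph E VS ES, subgraph E VF EF, EM \subset E & is_matching EM] /\
      is_tree VS ES /\ is_forest VF EF /\
      (* edge sets partition E(T) *)
      [/\ [disjoint ES & EF], [disjoint ES & EM], [disjoint EF & EM]
        & ES :|: EF :|: EM = E] /\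
      (* (a) *) [disjoint VS & VF] /\
      (* (b) *) (forall e, e \in EM -> #|e :&: VS| = 1 /\ #|e :&: VF| = 1) /\
      (* (c) *) (#|VS| <= uphalf k /\ forall x, x \in VF -> #|component VF EF x| <= uphalf k) /\
      (* (d) *) same_class E (edge_vertices EM :&: VS) /\
      (* (e) *) #|hull VS ES (edge_vertices EM :&: VS)| <= Delta ^ (4 * Delta + 1).
Proof.
move=> D; exists (6 * D ^ (4 * D + 2) + 6) => k hk V E hg [hne [hconn hacyc]] hkE hdeg.
case/set0Pn: hne => r _.
pose p := par hconn r; pose d := dep hconn r.
have hpr : p r = r := par_r hconn r.
have hd : forall x, x != r -> (d (p x)).+1 = d x := fun x hx => (par_spec hconn hx).2.
have hd0 : forall x, d x = 0 -> x = r := fun x => @dep0 _ _ hconn r x.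
have hdr : d r = 0 := dep_r hconn r.
have hpE : forall x, x != r -> [set x; p x] \in E := fun x hx => (par_spec hconn hx).1.
have hEp := edge_par hconn hacyc r.
have hV : #|V| = k.+1 by rewrite -(card_E hd hpE hEp hg) hkE addn1.
have hUV : #|~: sub p d r| <= #|V| by apply: max_card.
case: (leqP 2 D) => hD; last first.
  exfalso.
  have hsub : [set~ r] \subset chil r p r.
    apply/subsetP => x; rewrite !inE => hx.
    case: (eqVneq (p x) r) => [e|npx]; first by rewrite /child hx e eqxx.
    have := chil_card hd hdr hpE hUV hdeg (p x); rewrite npx.
    have : x \in chil r p (p x) by rewrite inE /child hx eqxx.
    move=> hxc; have : 0 < #|chil r p (p x)| by apply/card_gt0P; exists x.
    move=> h0 h1; move: hD h0 h1; clear; lia.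
  have := subset_leq_card hsub; rewrite cardsC1 hV /=.
  have := chil_card hd hdr hpE hUV hdeg r; rewrite eqxx /=.
  move: hk hD; clear; lia.
set h := uphalf k.
have hsr : sub p d r = [set: V] by apply/setP => x; rewrite !inE (isanc_r hd hd0 hdr).
have hr : h < #|sub p d r| by rewrite hsr cardsT hV /h; clear; lia.
case: (@arg_minnP _ r (fun x => h < #|sub p d x|) (fun x => #|sub p d x|) hr) => c hc hmin.
have hcz : forall z, child r p z c -> #|sub p d z| <= h.
  move=> z hz; rewrite leqNgt; apply/negP => hlt.
  have := hmin z hlt; rewrite leqNgt => /negP; apply; apply: proper_card.
  rewrite properE; apply/andP; split.
    apply/subsetP => y; rewrite !inE => hy.
    exact: (isanc_trans hdr (child_isanc hd hdr hz) hy).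
  apply/subsetP => hs; have : c \in sub p d c by rewrite inE isanc_refl.
  move/hs; rewrite inE => /isanc_d; rewrite (child_d hd hz); clear; lia.
have hcU : #|~: sub p d c| <= h.
  have := cardsC (sub p d c); rewrite hV; move: hc; rewrite /h; clear; lia.
have : forall a, exists b, forall z, child r p z a ->
    child r p b a /\ #|sub p d z| <= #|sub p d b|.
  move=> a; case: (pickP (fun z => child r p z a)) => [z0 hz0|hnone].
    exists [arg max_(z > z0 | child r p z a) #|sub p d z|].
    case: arg_maxnP => // b hb hmax z hz; split => //; exact: hmax.
  by exists a => z hz; rewrite hnone in hz.
case/fin_all_exists => big hbig.
exact: (main_sec hd hdr hpE hEp hg hbig hacyc hcz hcU hdeg hD (erefl _) hkE hk (erefl _)).
Qed.
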